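(* Let $\kappa_1>0$, $\kappa_2<0$ and $\gamma=-\kappa_2/\kappa_1$. Let $M$ be the set of all minimum points of $H_2(\mathbf{x},\mathbf{y})=-2\kappa_1\kappa_2G(\mathbf{x},\mathbf{y})+\kappa_1^2h(\mathbf{x},\mathbf{x})+\kappa_2^2h(\mathbf{y},\mathbf{y})$, $\mathbf{x},\mathbf{y}\in D$, $\mathbf{x}\ne\mathbf{y}$. Then there exist $p\in(0,1)$ and $q\in(-1,0)$ depending only on $\gamma$ such that $M=\{(P,Q)\in D\times D: P=p(\cos\theta,\sin\theta),\ Q=q(\cos\theta,\sin\theta),\ \theta\in[0,2\pi)\}$. If $\gamma=1$, then $p=-q=\sqrt{\sqrt5-2}$.
   Context: $D=\{\mathbf{x}\in\mathbb{R}^2:|\mathbf{x}|<1\}$. $G(\mathbf{x},\mathbf{y})=\frac1{2\pi}\ln\frac1{|\mathbf{x}-\mathbf{y}|}-h(\mathbf{x},\mathbf{y})$ is the Dirichlet Green's function of $-\Delta$ in $D$, where $h(\mathbf{x},\mathbf{y})=-\frac1{2\pi}\ln|\mathbf{y}|-\frac1{2\pi}\ln\left|\mathbf{x}-\frac{\mathbf{y}}{|\mathbf{y}|^2}\right|$. *)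

(* Defs.v *)
From Stdlib Require Import Reals.
Open Scope R_scope.

Definition pt := (R * R)%type.

Definition norm2 (x : pt) : R := sqrt (fst x ^ 2 + snd x ^ 2).

Definition psub (x y : pt) : pt := (fst x - fst y, snd x - snd y).
Definition pscale (c : R) (x : pt) : pt := (c * fst x, c * snd x).

Definition inD (x : pt) : Prop := norm2 x < 1.

(* regular part h(x,y) = -1/(2pi) ln|y| - 1/(2pi) ln|x - y/|y|^2|,
   for y <> 0; at y = 0 we use its continuous extension h(x,0) = 0. *)
Definition h0 (x y : pt) : R :=
  - / (2 * PI) * ln (norm2 y)
  - / (2 * PI) * ln (norm2 (psub x (pscale (/ (norm2 y ^ 2)) y))).

Definition h (x y : pt) : R :=
  if Req_EM_T (fst y) 0 then (if Req_EM_T (snd y) 0 then 0 else h0 x y) else h0 x y.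

Definition G (x y : pt) : R :=
  / (2 * PI) * ln (/ norm2 (psub x y)) - h x y.

Definition H2 (k1 k2 : R) (x y : pt) : R :=
  - 2 * k1 * k2 * G x y + k1 ^ 2 * h x x + k2 ^ 2 * h y y.

Definition is_min_point (k1 k2 : R) (x y : pt) : Prop :=
  inD x /\ inD y /\ x <> y /\
  forall x' y' : pt, inD x' -> inD y' -> x' <> y' -> H2 k1 k2 x y <= H2 k1 k2 x' y'.

(* Main.v *)
Require Import Defs.
From Stdlib Require Import Reals Lra.
From Coquelicot Require Import Coquelicot.
Open Scope R_scope.

Lemma min_by_deriv (f f' : R -> R) lo hi x0 :
  (forall c, lo < c < hi -> derivable_pt_lim f c (f' c)) ->
  (forall c, lo < c < x0 -> f' c < 0) ->
  (forall c, x0 < c < hi -> 0 < f' c) ->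
  lo < x0 < hi -> forall x, lo < x < hi -> x <> x0 -> f x0 < f x.
Proof.
  intros Hd Hn Hp Hx0 x Hx Hne.
  destruct (Rlt_or_le x x0) as [Hlt|Hle].
  - destruct (MVT_cor2 f f' x x0 Hlt) as [c [Hc1 Hc2]].
    { intros c Hc; apply Hd; lra. }
    assert (f' c < 0) by (apply Hn; lra).
    assert (f' c * (x0 - x) < 0).
    { nra. }
    lra.
  - assert (Hlt : x0 < x) by (destruct Hle; [auto| congruence]).
    destruct (MVT_cor2 f f' x0 x Hlt) as [c [Hc1 Hc2]].
    { intros c Hc; apply Hd; lra. }
    assert (0 < f' c) by (apply Hp; lra).
    assert (0 < f' c * (x - x0)) by (apply Rmult_lt_0_compat; lra).
    lra.
Qed.

Definition L (x : R) : R := ln ((1 + x) / (1 - x)).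

Lemma tangentA a0 a : -1 < a0 < 1 -> -1 < a < 1 -> a <> a0 ->
  - ln (1 - a0^2) - a0 * L a0 < - ln (1 - a^2) - a0 * L a.
Proof.
  intros H0 H1 Hne.
  apply (min_by_deriv (fun x => - ln (1 - x^2) - a0 * L x)
           (fun x => 2 * (x - a0) / (1 - x^2)) (-1) 1 a0); auto.
  - intros c Hc. apply is_derive_Reals. unfold L.
    assert (0 < 1 - c^2) by nra.
    auto_derive.
    + repeat split; try lra. apply Rdiv_lt_0_compat; lra.
    + field. repeat split; lra.
  - intros c Hc. assert (0 < 1 - c^2) by nra.
    unfold Rdiv. assert (0 < / (1 - c^2)) by (apply Rinv_0_lt_compat; lra). nra.
  - intros c Hc. assert (0 < 1 - c^2) by nra.
    apply Rdiv_lt_0_compat; lra.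
Qed.

Lemma tangentB T0 T : 0 < T0 < 1 -> 0 < T < 1 ->
  - ln T0 + ((1 - T0^2)/T0)/2 * L T0 <= - ln T + ((1 - T0^2)/T0)/2 * L T.
Proof.
  intros H0 H1.
  destruct (Req_dec T T0) as [->|Hne]; [lra|].
  set (k := (1 - T0^2)/T0).
  assert (Hk : 0 < k) by (unfold k; apply Rdiv_lt_0_compat; nra).
  assert (HkT : T0^2 + k*T0 - 1 = 0) by (unfold k; field; lra).
  left.
  apply (min_by_deriv (fun x => - ln x + k/2 * L x)
           (fun x => (x^2 + k*x - 1) / (x * (1 - x^2))) 0 1 T0); auto.
  - intros c Hc. apply is_derive_Reals. unfold L.
    assert (0 < 1 - c^2) by nra.
    auto_derive.
    + repeat split; try lra. apply Rdiv_lt_0_compat; lra.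
    + field. repeat split; lra.
  - intros c Hc. assert (0 < 1 - c^2) by nra.
    assert (0 < c * (1 - c^2)) by nra.
    assert (c^2 + k*c - 1 < 0).
    { replace (c^2 + k*c - 1) with ((c - T0)*(c + T0 + k) + (T0^2 + k*T0 - 1)) by ring. rewrite HkT. nra. }
    unfold Rdiv. assert (0 < / (c * (1 - c^2))) by (apply Rinv_0_lt_compat; lra). nra.
  - intros c Hc. assert (0 < 1 - c^2) by nra.
    assert (0 < c^2 + k*c - 1).
    { replace (c^2 + k*c - 1) with ((c - T0)*(c + T0 + k) + (T0^2 + k*T0 - 1)) by ring. rewrite HkT. nra. }
    apply Rdiv_lt_0_compat; nra.
Qed.

Lemma L_add a b : -1 < a < 1 -> -1 < b < 1 -> 0 < 1 + a*b ->
  L ((a+b)/(1+a*b)) = L a + L b.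
Proof.
  intros Ha Hb Hab. unfold L.
  rewrite <- ln_mult by (apply Rdiv_lt_0_compat; lra).
  f_equal. field. repeat split; try lra. intro. nra.
Qed.

Definition F (g a b : R) : R :=
  - 2 * g * ln ((a+b)/(1+a*b)) - ln (1 - a^2) - g^2 * ln (1 - b^2).

Lemma key g a0 b0 a b : 0 < g -> 0 < a0 < 1 -> 0 < b0 < 1 ->
  a0 = g^2 * b0 ->
  g * ((1 - a0^2) * (1 - b0^2)) = a0 * (1 + a0*b0) * (a0 + b0) ->
  0 <= a < 1 -> 0 <= b < 1 -> 0 < a + b ->
  F g a0 b0 <= F g a b /\ (F g a b <= F g a0 b0 -> a = a0 /\ b = b0).
Proof.
  intros Hg Ha0 Hb0 Hab0 Hcrit Ha Hb Hab.
  set (T0 := (a0+b0)/(1+a0*b0)).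
  set (T := (a+b)/(1+a*b)).
  assert (HT0 : 0 < T0 < 1).
  { unfold T0. split. apply Rdiv_lt_0_compat; nra.
    apply (Rmult_lt_reg_r (1+a0*b0)); [nra|]. unfold Rdiv. rewrite Rmult_assoc, Rinv_l by nra. nra. }
  assert (HT : 0 < T < 1).
  { unfold T. split. apply Rdiv_lt_0_compat; nra.
    apply (Rmult_lt_reg_r (1+a*b)); [nra|]. unfold Rdiv. rewrite Rmult_assoc, Rinv_l by nra. nra. }
  assert (Hk : g * ((1 - T0^2)/T0) = a0).
  { transitivity (g * ((1 - a0^2) * (1 - b0^2)) / ((1+a0*b0)*(a0+b0))).
    - unfold T0. field. split; nra.
    - rewrite Hcrit. field. split; nra. }
  assert (Hk2 : g * ((1 - T0^2)/T0) = g^2 * b0) by lra.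
  pose proof (tangentB T0 T HT0 HT) as HB.
  assert (E1 : L T0 = L a0 + L b0) by (unfold T0; apply L_add; nra).
  assert (E2 : L T = L a + L b) by (unfold T; apply L_add; nra).
  rewrite E1, E2 in HB.
  assert (HA : forall x x0, -1 < x0 < 1 -> -1 < x < 1 ->
     - ln (1 - x0^2) - x0 * L x0 <= - ln (1 - x^2) - x0 * L x).
  { intros x x0 H1 H2. destruct (Req_dec x x0) as [->|Hne]; [lra|].
    left. apply tangentA; auto. }
  pose proof (HA a a0 ltac:(lra) ltac:(lra)) as HAa.
  pose proof (HA b b0 ltac:(lra) ltac:(lra)) as HAb.
  set (k := (1 - T0^2)/T0) in *.
  assert (H1 : 2*g*(- ln T0 + k/2*(L a0 + L b0)) <= 2*g*(- ln T + k/2*(L a + L b)))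
    by (apply Rmult_le_compat_l; lra).
  assert (H2 : g^2*(- ln (1 - b0^2) - b0 * L b0) <= g^2*(- ln (1 - b^2) - b0 * L b))
    by (apply Rmult_le_compat_l; [nra|lra]).
  replace (2*g*(- ln T0 + k/2*(L a0 + L b0))) with (-2*g*ln T0 + (g*k)*(L a0 + L b0)) in H1 by field.
  replace (2*g*(- ln T + k/2*(L a + L b))) with (-2*g*ln T + (g*k)*(L a + L b)) in H1 by field.
  rewrite Hk in H1.
  assert (Hsum : F g a0 b0 <= F g a b).
  { unfold F. fold T0 T. rewrite Hab0 in HAa, H1 |- *. lra. }
  split; auto.
  intros Hle.
  destruct (Req_dec a a0) as [Ea|Na]; destruct (Req_dec b b0) as [Eb|Nb]; auto;
  exfalso.
  - pose proof (tangentA b0 b ltac:(lra) ltac:(lra) Nb).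
    unfold F in Hle, Hsum. fold T0 T in Hle, Hsum. rewrite Hab0 in *; nra.
  - pose proof (tangentA a0 a ltac:(lra) ltac:(lra) Na).
    unfold F in Hle, Hsum. fold T0 T in Hle, Hsum. rewrite Hab0 in *; nra.
  - pose proof (tangentA a0 a ltac:(lra) ltac:(lra) Na).
    unfold F in Hle, Hsum. fold T0 T in Hle, Hsum. rewrite Hab0 in *; nra.
Qed.

Definition Ag (g : R) := g^3 * (1 - g + g^2).
Definition Bg (g : R) := 1 + g + g^3 + g^4.
Definition sg (g : R) := (- Bg g + sqrt (Bg g ^2 + 4 * Ag g)) / (2 * Ag g).
Definition bst (g : R) := sqrt (sg g).
Definition ast (g : R) := g^2 * bst g.

Lemma quad_root A B x : 0 < A -> x*x = B^2 + 4*A -> A * ((- B + x)/(2*A)) ^ 2 + B * ((- B + x)/(2*A)) - 1 = 0.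
Proof. intros HA Hx. field_simplify; [|lra]. replace (x^2) with (x*x) by ring. rewrite Hx. field. lra.
Qed.

Lemma sg_props g : 0 < g ->
  0 < sg g /\ Ag g * sg g ^2 + Bg g * sg g - 1 = 0 /\ sg g < 1 /\ g^4 * sg g < 1.
Proof.
  intros Hg.
  assert (HA : 0 < Ag g) by (unfold Ag; assert (0 < 1 - g + g^2) by nra; assert (0 < g^3) by (apply pow_lt; lra); nra).
  assert (HB : 0 < Bg g) by (unfold Bg; assert (0 < g^3) by (apply pow_lt; lra); assert (0 < g^4) by (apply pow_lt; lra); lra).
  set (D := Bg g ^2 + 4 * Ag g).
  assert (HD : 0 <= D) by (unfold D; nra).
  assert (Hsq : sqrt D * sqrt D = D) by (apply sqrt_sqrt; auto).
  assert (Hsq0 : 0 <= sqrt D) by apply sqrt_pos.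
  assert (Hgt : Bg g < sqrt D).
  { apply Rnot_le_lt; intro. assert (sqrt D * sqrt D <= Bg g * Bg g) by (apply Rmult_le_compat; lra).
    assert (HDd : D = Bg g ^2 + 4 * Ag g) by reflexivity. nra. }
  assert (Hpos : 0 < sg g).
  { unfold sg. fold D. apply Rdiv_lt_0_compat; lra. }
  assert (Heq : Ag g * sg g ^2 + Bg g * sg g - 1 = 0).
  { unfold sg. fold D. apply quad_root; auto. }
  set (s := sg g) in *.
  assert (Hs1 : s < 1).
  { apply Rnot_le_lt; intro. assert (1 <= s^2) by nra. assert (Ag g <= Ag g * s^2) by nra.
    assert (Bg g <= Bg g * s) by nra. assert (1 < Bg g) by (unfold Bg; assert (0 < g^3) by (apply pow_lt; lra); assert (0 < g^4) by (apply pow_lt; lra); lra). lra. }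
  split; [auto|split; [auto|split; [auto|]]].
  assert (Hq : (1 - g^4 * s) * (1 - s) = g * (1 + g^2) * s * (1 + g^2 * s)).
  { unfold Ag, Bg in Heq. nra. }
  apply Rnot_le_lt; intro.
  assert (0 < g * (1 + g^2) * s * (1 + g^2 * s)).
  { assert (0 < g*(1+g^2)) by nra. assert (0 < 1 + g^2*s) by nra. 
    apply Rmult_lt_0_compat; [|lra]. apply Rmult_lt_0_compat; lra. }
  nra.
Qed.

Definition nsq (P : pt) : R := fst P ^ 2 + snd P ^ 2.
Definition dot (P Q : pt) : R := fst P * fst Q + snd P * snd Q.
Definition Nf (P Q : pt) : R := 1 - 2 * dot P Q + nsq P * nsq Q.
Definition E (g : R) (P Q : pt) : R :=
  g * ln (Nf P Q / nsq (psub P Q)) - ln (1 - nsq P) - g^2 * ln (1 - nsq Q).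

Lemma nsq_ge0 P : 0 <= nsq P.
Proof. unfold nsq. nra. Qed.

Lemma norm2_sq P : norm2 P ^ 2 = nsq P.
Proof. unfold norm2. rewrite pow2_sqrt; [reflexivity|apply nsq_ge0]. Qed.

Lemma norm2_ge0 P : 0 <= norm2 P.
Proof. apply sqrt_pos. Qed.

Lemma inD_nsq P : inD P -> nsq P < 1.
Proof. unfold inD. intro H. rewrite <- norm2_sq. pose proof (norm2_ge0 P). nra. Qed.

Lemma ln_norm2 P : 0 < nsq P -> ln (norm2 P) = ln (nsq P) / 2.
Proof.
  intro H. unfold norm2. fold (nsq P).
  assert (0 < sqrt (nsq P)) by (apply sqrt_lt_R0; auto).
  rewrite <- (sqrt_sqrt (nsq P)) at 2 by lra.
  rewrite ln_mult by auto. field.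
Qed.

Lemma ln_sq x : 0 < x -> ln (x^2) = 2 * ln x.
Proof. intro. replace (x^2) with (x*x) by ring. rewrite ln_mult by auto. ring. Qed.

Lemma nsq_pos_of_ne P : ~ (fst P = 0 /\ snd P = 0) -> 0 < nsq P.
Proof.
  intro H. unfold nsq. destruct (Req_dec (fst P) 0); destruct (Req_dec (snd P) 0).
  - exfalso; auto.
  - assert (0 < snd P ^2) by (rewrite <- Rsqr_pow2; apply Rsqr_pos_lt; auto). nra.
  - assert (0 < fst P ^2) by (rewrite <- Rsqr_pow2; apply Rsqr_pos_lt; auto). nra.
  - assert (0 < fst P ^2) by (rewrite <- Rsqr_pow2; apply Rsqr_pos_lt; auto). nra.
Qed.

Lemma hPP P : nsq P < 1 -> h P P = - / (2 * PI) * ln (1 - nsq P).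
Proof.
  intro HP.
  assert (Hpi : 0 < PI) by apply PI_RGT_0.
  assert (Hgen : ~ (fst P = 0 /\ snd P = 0) -> h0 P P = - / (2 * PI) * ln (1 - nsq P)).
  { intro Hne. pose proof (nsq_pos_of_ne P Hne) as Hn. unfold h0.
    rewrite norm2_sq.
    assert (Heq : nsq (psub P (pscale (/ nsq P) P)) = (1 - nsq P)^2 / nsq P).
    { unfold nsq, psub, pscale; simpl. unfold nsq in Hn. field. lra. }
    assert (0 < (1 - nsq P)^2 / nsq P) by (apply Rdiv_lt_0_compat; auto; apply pow_lt; lra).
    rewrite !ln_norm2 by (try rewrite Heq; auto).
    rewrite Heq.
    assert (Hl : ln ((1 - nsq P)^2 / nsq P) = 2 * ln (1 - nsq P) - ln (nsq P)).
    { unfold Rdiv. rewrite ln_mult by (try apply pow_lt; try apply Rinv_0_lt_compat; lra).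
      rewrite ln_Rinv, ln_sq by lra. ring. }
    rewrite Hl. field. lra. }
  unfold h. destruct (Req_EM_T (fst P) 0) as [E1|E1]; destruct (Req_EM_T (snd P) 0) as [E2|E2].
  - unfold nsq. rewrite E1, E2. replace (1 - (0^2 + 0^2)) with 1 by ring. rewrite ln_1. ring.
  - apply Hgen. tauto.
  - apply Hgen. tauto.
  - apply Hgen. tauto.
Qed.

Lemma Nf_gt P Q : nsq P < 1 -> nsq Q < 1 -> nsq (psub P Q) < Nf P Q.
Proof.
  intros HP HQ.
  assert (Nf P Q - nsq (psub P Q) = (1 - nsq P) * (1 - nsq Q))
    by (unfold Nf, nsq, psub, dot; simpl; ring).
  assert (0 < (1 - nsq P) * (1 - nsq Q)) by (apply Rmult_lt_0_compat; lra). lra.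
Qed.

Lemma dsq_pos P Q : P <> Q -> 0 < nsq (psub P Q).
Proof.
  intro H. apply nsq_pos_of_ne. destruct P as [x1 x2], Q as [y1 y2]; simpl.
  intros [H1 H2]. apply H. f_equal; lra.
Qed.

Lemma GPQ P Q : nsq P < 1 -> nsq Q < 1 -> P <> Q ->
  G P Q = / (2 * PI) * (ln (Nf P Q / nsq (psub P Q)) / 2).
Proof.
  intros HP HQ Hne.
  assert (Hpi : 0 < PI) by apply PI_RGT_0.
  pose proof (dsq_pos P Q Hne) as Hd. pose proof (Nf_gt P Q HP HQ) as HN.
  assert (Hl : ln (/ norm2 (psub P Q)) = - (ln (nsq (psub P Q)) / 2)).
  { rewrite ln_Rinv by (apply sqrt_lt_R0; auto). rewrite ln_norm2; auto. }
  assert (Hq : ln (Nf P Q / nsq (psub P Q)) = ln (Nf P Q) - ln (nsq (psub P Q))).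
  { unfold Rdiv. rewrite ln_mult, ln_Rinv; try apply Rinv_0_lt_compat; lra. }
  assert (Hgen : ~ (fst Q = 0 /\ snd Q = 0) -> h0 P Q = - / (2 * PI) * (ln (Nf P Q) / 2)).
  { intro HQ0. pose proof (nsq_pos_of_ne Q HQ0) as Hn. unfold h0.
    rewrite norm2_sq.
    assert (Heq : nsq (psub P (pscale (/ nsq Q) Q)) = Nf P Q / nsq Q).
    { unfold Nf, dot, nsq, psub, pscale; simpl. unfold nsq in Hn. field. lra. }
    assert (0 < Nf P Q / nsq Q) by (apply Rdiv_lt_0_compat; lra).
    rewrite !ln_norm2 by (try rewrite Heq; auto).
    rewrite Heq.
    assert (Hl2 : ln (Nf P Q / nsq Q) = ln (Nf P Q) - ln (nsq Q)).
    { unfold Rdiv. rewrite ln_mult, ln_Rinv; try apply Rinv_0_lt_compat; lra. }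
    rewrite Hl2. field. lra. }
  unfold G, h. rewrite Hl.
  destruct (Req_EM_T (fst Q) 0) as [E1|E1]; destruct (Req_EM_T (snd Q) 0) as [E2|E2].
  - assert (HN1 : Nf P Q = 1) by (unfold Nf, dot, nsq; rewrite E1, E2; ring).
    rewrite Hq, HN1, ln_1. field. lra.
  - rewrite Hgen by tauto. rewrite Hq. field. lra.
  - rewrite Hgen by tauto. rewrite Hq. field. lra.
  - rewrite Hgen by tauto. rewrite Hq. field. lra.
Qed.

Lemma H2_eq k1 k2 P Q : 0 < k1 -> inD P -> inD Q -> P <> Q ->
  H2 k1 k2 P Q = k1^2 / (2 * PI) * E (- k2 / k1) P Q.
Proof.
  intros Hk HP HQ Hne. apply inD_nsq in HP. apply inD_nsq in HQ.
  assert (Hpi : 0 < PI) by apply PI_RGT_0.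
  unfold H2, E. rewrite GPQ, !hPP; auto. field. lra.
Qed.

Lemma CS P Q : dot P Q ^ 2 <= nsq P * nsq Q.
Proof.
  unfold dot, nsq.
  assert (0 <= (fst P * snd Q - snd P * fst Q)^2) by (rewrite <- Rsqr_pow2; apply Rle_0_sqr).
  replace ((fst P ^ 2 + snd P ^ 2) * (fst Q ^ 2 + snd Q ^ 2)) with
    ((fst P * fst Q + snd P * snd Q) ^ 2 + (fst P * snd Q - snd P * fst Q)^2) by ring.
  lra.
Qed.

Lemma dsq_eq P Q : nsq (psub P Q) = nsq P + nsq Q - 2 * dot P Q.
Proof. unfold nsq, dot, psub; simpl; ring. Qed.

Lemma ratio_diff P Q : nsq P < 1 -> nsq Q < 1 -> P <> Q ->
  let a := norm2 P in let b := norm2 Q in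
  0 < a + b /\
  Nf P Q / nsq (psub P Q) - (1 + a*b)^2/(a+b)^2
   = 2 * (dot P Q + a*b) * (1 - a^2) * (1 - b^2) / (nsq (psub P Q) * (a+b)^2) /\
  - (a*b) <= dot P Q.
Proof.
  intros HP HQ Hne a b.
  pose proof (dsq_pos P Q Hne) as Hd.
  assert (Ha2 : a^2 = nsq P) by apply norm2_sq.
  assert (Hb2 : b^2 = nsq Q) by apply norm2_sq.
  assert (Ha : 0 <= a) by apply norm2_ge0.
  assert (Hb : 0 <= b) by apply norm2_ge0.
  pose proof (CS P Q) as Hcs.
  assert (Ht : - (a*b) <= dot P Q).
  { assert (dot P Q ^2 <= (a*b)^2) by (rewrite Rpow_mult_distr, Ha2, Hb2; auto).
    assert (0 <= a*b) by nra. apply Rnot_lt_le; intro.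
    assert (0 < (- dot P Q - a*b) * (- dot P Q + a*b)) by (apply Rmult_lt_0_compat; lra). nra. }
  assert (Hab : 0 < a + b).
  { destruct (Rle_lt_or_eq_dec 0 (a+b)) as [H|H]; [lra|auto|].
    exfalso. assert (Ea : a = 0) by lra. assert (Eb : b = 0) by lra.
    rewrite dsq_eq in Hd. assert (E1 : nsq P = 0) by (rewrite <- Ha2, Ea; ring).
    assert (E2 : nsq Q = 0) by (rewrite <- Hb2, Eb; ring).
    rewrite E1, E2 in Hcs, Hd. assert (dot P Q = 0) by nra. lra. }
  split; [auto|split; [|auto]].
  rewrite dsq_eq in *. unfold Nf. rewrite <- Ha2, <- Hb2 in *.
  field. split; nra.
Qed.

Lemma ln_ratio a b : 0 < a + b -> 0 < 1 + a*b ->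
  ln ((1 + a*b)^2/(a+b)^2) = - 2 * ln ((a+b)/(1+a*b)).
Proof.
  intros H1 H2.
  replace ((1 + a*b)^2/(a+b)^2) with (/ (((a+b)/(1+a*b))^2)) by (field; lra).
  assert (0 < (a+b)/(1+a*b)) by (apply Rdiv_lt_0_compat; lra).
  rewrite ln_Rinv by (apply pow_lt; lra). rewrite ln_sq by lra. ring.
Qed.

Lemma E_bound g P Q : 0 < g -> nsq P < 1 -> nsq Q < 1 -> P <> Q ->
  let a := norm2 P in let b := norm2 Q in
  0 < a + b /\ a < 1 /\ b < 1 /\
  F g a b <= E g P Q /\ (E g P Q <= F g a b -> dot P Q = - (a*b)) /\
  (dot P Q = - (a*b) -> E g P Q = F g a b).
Proof.
  intros Hg HP HQ Hne a b.
  destruct (ratio_diff P Q HP HQ Hne) as [Hab [Hdiff Ht]]. fold a b in Hab, Hdiff, Ht.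
  assert (Ha2 : a^2 = nsq P) by apply norm2_sq.
  assert (Hb2 : b^2 = nsq Q) by apply norm2_sq.
  assert (Ha : 0 <= a) by apply norm2_ge0.
  assert (Hb : 0 <= b) by apply norm2_ge0.
  assert (Ha1 : a < 1) by nra. assert (Hb1 : b < 1) by nra.
  pose proof (dsq_pos P Q Hne) as Hd.
  assert (Y0 : 0 < (1 + a*b)^2/(a+b)^2) by (apply Rdiv_lt_0_compat; apply pow_lt; nra).
  assert (HF : F g a b = E g P Q - g * (ln (Nf P Q / nsq (psub P Q)) - ln ((1 + a*b)^2/(a+b)^2))).
  { unfold F, E. rewrite ln_ratio by nra. rewrite Ha2, Hb2. ring. }
  assert (Hnn : 0 <= 2 * (dot P Q + a*b) * (1 - a^2) * (1 - b^2) / (nsq (psub P Q) * (a+b)^2)).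
  { apply Rmult_le_pos. assert (0 <= (1 - a^2) * (1 - b^2)) by nra. nra.
    left. apply Rinv_0_lt_compat. apply Rmult_lt_0_compat; auto. apply pow_lt; lra. }
  assert (Hle : ln ((1 + a*b)^2/(a+b)^2) <= ln (Nf P Q / nsq (psub P Q))).
  { apply ln_le; auto. lra. }
  split; [auto|split; [auto|split; [auto|split; [|split]]]].
  - rewrite HF. nra.
  - intro H. rewrite HF in H.
    assert (Heq : ln (Nf P Q / nsq (psub P Q)) = ln ((1 + a*b)^2/(a+b)^2)) by nra.
    apply ln_inv in Heq; [|lra|auto].
    assert (Z : 2 * (dot P Q + a*b) * (1 - a^2) * (1 - b^2) / (nsq (psub P Q) * (a+b)^2) = 0) by lra.
    unfold Rdiv in Z. apply Rmult_integral in Z. destruct Z as [Z|Z].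
    + assert (0 < (1 - a^2) * (1 - b^2)) by (apply Rmult_lt_0_compat; nra). nra.
    + exfalso. revert Z. apply Rinv_neq_0_compat. apply Rgt_not_eq. apply Rmult_lt_0_compat; auto. apply pow_lt; lra.
  - intro Ht'. rewrite HF.
    replace (dot P Q + a*b) with 0 in Hdiff by lra.
    replace (ln (Nf P Q / nsq (psub P Q))) with (ln ((1 + a*b)^2/(a+b)^2)).
    ring. f_equal. unfold Rdiv at 3 in Hdiff. lra.
Qed.

Lemma st_props g : 0 < g ->
  0 < ast g < 1 /\ 0 < bst g < 1 /\ ast g = g^2 * bst g /\
  g * ((1 - ast g^2) * (1 - bst g^2)) = ast g * (1 + ast g * bst g) * (ast g + bst g).
Proof.
  intros Hg. destruct (sg_props g Hg) as [Hs0 [Hq [Hs1 Hs4]]].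
  assert (Hb2 : bst g ^2 = sg g) by (unfold bst; apply pow2_sqrt; lra).
  assert (Hb0 : 0 < bst g) by (unfold bst; apply sqrt_lt_R0; auto).
  assert (Hb1 : bst g < 1).
  { unfold bst. rewrite <- sqrt_1. apply sqrt_lt_1; lra. }
  assert (Ha2 : ast g ^2 = g^4 * sg g) by (unfold ast; rewrite <- Hb2; ring).
  assert (Ha0 : 0 < ast g) by (unfold ast; apply Rmult_lt_0_compat; [apply pow_lt|]; lra).
  assert (Ha1 : ast g < 1) by (assert (ast g ^2 < 1) by lra; nra).
  split; [lra|split; [lra|split; [reflexivity|]]].
  assert (Hid : g * ((1 - ast g^2) * (1 - bst g^2)) - ast g * (1 + ast g * bst g) * (ast g + bst g)
     = - g * (Ag g * (bst g ^2)^2 + Bg g * bst g ^2 - 1)) by (unfold ast, Ag, Bg; ring).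
  rewrite Hb2, Hq in Hid. rewrite Hb2. lra.
Qed.

Lemma norm2_polar r t : norm2 (pscale r (cos t, sin t)) = Rabs r.
Proof.
  unfold norm2, pscale; cbn [fst snd].
  replace ((r * cos t) ^ 2 + (r * sin t) ^ 2) with (r²) .
  apply sqrt_Rsqr_abs.
  pose proof (sin2_cos2 t). unfold Rsqr in *. nra.
Qed.

Lemma polar P r : norm2 P = r -> 0 < r ->
  exists t, 0 <= t < 2 * PI /\ P = pscale r (cos t, sin t).
Proof.
  intros Hr Hr0. destruct P as [x y].
  assert (Hn : r^2 = x^2 + y^2) by (rewrite <- Hr; apply (norm2_sq (x,y))).
  assert (Hc : -1 <= x / r <= 1).
  { split.
    - apply (Rmult_le_reg_r r); auto. unfold Rdiv. rewrite Rmult_assoc, Rinv_l by lra. nra.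
    - apply (Rmult_le_reg_r r); auto. unfold Rdiv. rewrite Rmult_assoc, Rinv_l by lra. nra. }
  assert (Hs : sqrt (1 - (x / r)²) = Rabs (y / r)).
  { rewrite <- sqrt_Rsqr_abs. f_equal. unfold Rsqr. field_simplify_eq; [nra|lra]. }
  assert (Hx : x = r * (x / r)) by (field; lra).
  pose proof PI_RGT_0.
  destruct (Rle_or_lt 0 y) as [Hy|Hy].
  - exists (acos (x / r)). pose proof (acos_bound (x / r)). split.
    + lra.
    + unfold pscale; cbn [fst snd]. rewrite cos_acos, sin_acos by auto. rewrite Hs.
      rewrite Rabs_pos_eq. f_equal; [auto|field; lra].
      unfold Rdiv. apply Rmult_le_pos; auto. left; apply Rinv_0_lt_compat; auto.
  - exists (2 * PI - acos (x / r)). pose proof (acos_bound (x / r)).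
    assert (Hne : acos (x / r) <> 0).
    { intro Ha0. assert (Hx1 : x / r = 1) by (rewrite <- (cos_acos (x/r)), Ha0 by auto; apply cos_0).
      assert (y^2 = 0).
      { assert (x = r) by (rewrite Hx, Hx1; ring). subst x. nra. }
      assert (Hyy : y * y = 0) by lra. apply Rmult_integral in Hyy. lra. }
    split.
    + lra.
    + unfold pscale; cbn [fst snd]. rewrite cos_minus, sin_minus, cos_2PI, sin_2PI.
      rewrite cos_acos, sin_acos by auto. rewrite Hs.
      rewrite Rabs_left. f_equal; [field; lra|field; lra].
      unfold Rdiv. assert (0 < / r) by (apply Rinv_0_lt_compat; auto). nra.
Qed.

Lemma polar_pair g t : 0 < g ->
  let P := pscale (ast g) (cos t, sin t) in
  let Q := pscale (- bst g) (cos t, sin t) in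
  inD P /\ inD Q /\ P <> Q /\ E g P Q = F g (ast g) (bst g).
Proof.
  intros Hg P Q.
  destruct (st_props g Hg) as [Ha [Hb [Hab Hc]]].
  assert (NP : norm2 P = ast g) by (unfold P; rewrite norm2_polar; apply Rabs_pos_eq; lra).
  assert (NQ : norm2 Q = bst g) by (unfold Q; rewrite norm2_polar, Rabs_Ropp; apply Rabs_pos_eq; lra).
  assert (HP : inD P) by (unfold inD; lra).
  assert (HQ : inD Q) by (unfold inD; lra).
  pose proof (sin2_cos2 t) as Hsc. unfold Rsqr in Hsc.
  assert (Hne : P <> Q).
  { unfold P, Q, pscale. intro Heq. injection Heq as E1 E2.
    assert (cos t = 0) by nra. assert (sin t = 0) by nra. nra. }
  split; [auto|split; [auto|split; [auto|]]].
  destruct (E_bound g P Q Hg (inD_nsq P HP) (inD_nsq Q HQ) Hne) as [_ [_ [_ [_ [_ H]]]]].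
  rewrite NP, NQ in H. apply H.
  unfold dot, P, Q, pscale; cbn [fst snd].
  transitivity (-(ast g * bst g) * (sin t * sin t + cos t * cos t)); [ring | rewrite Hsc; ring].
Qed.

Lemma E_min g P Q : 0 < g -> inD P -> inD Q -> P <> Q ->
  F g (ast g) (bst g) <= E g P Q /\
  (E g P Q <= F g (ast g) (bst g) ->
     norm2 P = ast g /\ norm2 Q = bst g /\ dot P Q = - (ast g * bst g)).
Proof.
  intros Hg HP HQ Hne.
  destruct (st_props g Hg) as [Ha [Hb [Hab Hc]]].
  destruct (E_bound g P Q Hg (inD_nsq P HP) (inD_nsq Q HQ) Hne) as [Hs [Ha1 [Hb1 [HFE [Hdot _]]]]].
  pose proof (norm2_ge0 P). pose proof (norm2_ge0 Q).
  destruct (key g (ast g) (bst g) (norm2 P) (norm2 Q) Hg Ha Hb Hab Hc ltac:(lra) ltac:(lra) Hs)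
    as [K1 K2].
  split; [lra|].
  intro Hle. destruct K2 as [E1 E2]; [lra|].
  split; [auto|split; [auto|]].
  rewrite <- E1, <- E2. apply Hdot. lra.
Qed.

Lemma colinear P Q a b : norm2 P = a -> norm2 Q = b -> 0 < a -> dot P Q = - (a * b) ->
  Q = pscale (- b / a) P.
Proof.
  intros HP HQ Ha Hd.
  pose proof (norm2_sq P) as H1. pose proof (norm2_sq Q) as H2.
  rewrite HP in H1. rewrite HQ in H2.
  destruct P as [x1 x2], Q as [y1 y2]. unfold nsq, dot in *; cbn [fst snd] in *.
  assert (Z : (b * x1 + a * y1)^2 + (b * x2 + a * y2)^2 = 0).
  { replace ((b * x1 + a * y1)^2 + (b * x2 + a * y2)^2) with
      (b^2 * (x1^2 + x2^2) + a^2 * (y1^2 + y2^2) + 2*a*b*(x1*y1 + x2*y2)) by ring.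
    rewrite <- H1, <- H2, Hd. ring. }
  assert (S1 : 0 <= (b * x1 + a * y1)^2) by (rewrite <- Rsqr_pow2; apply Rle_0_sqr).
  assert (S2 : 0 <= (b * x2 + a * y2)^2) by (rewrite <- Rsqr_pow2; apply Rle_0_sqr).
  assert (Z1 : b * x1 + a * y1 = 0) by (apply Rsqr_0_uniq; rewrite Rsqr_pow2; lra).
  assert (Z2 : b * x2 + a * y2 = 0) by (apply Rsqr_0_uniq; rewrite Rsqr_pow2; lra).
  unfold pscale; cbn [fst snd]. f_equal; field_simplify_eq; lra.
Qed.

Lemma sg1 : sg 1 = sqrt 5 - 2.
Proof.
  unfold sg, Ag, Bg.
  replace ((1 + 1 + 1 ^ 3 + 1 ^ 4) ^ 2 + 4 * (1 ^ 3 * (1 - 1 + 1 ^ 2))) with (4 * 5) by ring.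
  rewrite sqrt_mult by lra.
  replace 4 with (2 * 2) at 1 by ring. rewrite sqrt_square by lra.
  field.
Qed.

Theorem propositionA1 :
  exists p q : R -> R,
    (forall gamma : R, 0 < gamma ->
       0 < p gamma < 1 /\ -1 < q gamma < 0) /\
    (forall k1 k2 : R, 0 < k1 -> k2 < 0 ->
       let gamma := - k2 / k1 in
       forall P Q : pt,
         is_min_point k1 k2 P Q <->
         (inD P /\ inD Q /\
          exists theta : R, 0 <= theta < 2 * PI /\
            P = pscale (p gamma) (cos theta, sin theta) /\
            Q = pscale (q gamma) (cos theta, sin theta))) /\
    p 1 = sqrt (sqrt 5 - 2) /\ q 1 = - sqrt (sqrt 5 - 2).
Proof.
  exists ast, (fun g => - bst g).
  split; [|split; [|split]].
  - intros g Hg. destruct (st_props g Hg) as [Ha [Hb _]]. lra.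
  - intros k1 k2 Hk1 Hk2 g P Q.
    assert (Hg : 0 < g) by (unfold g; apply Rdiv_lt_0_compat; lra).
    assert (Hpi : 0 < PI) by apply PI_RGT_0.
    assert (Hc : 0 < k1^2 / (2 * PI)) by (apply Rdiv_lt_0_compat; nra).
    destruct (st_props g Hg) as [Ha [Hb [Hab Hcr]]].
    split.
    + intros [HP [HQ [Hne Hmin]]].
      destruct (polar_pair g 0 Hg) as [HP0 [HQ0 [Hne0 HE0]]].
      specialize (Hmin _ _ HP0 HQ0 Hne0).
      rewrite !H2_eq in Hmin by auto. fold g in Hmin. rewrite HE0 in Hmin.
      assert (Hle : E g P Q <= F g (ast g) (bst g)).
      { apply (Rmult_le_reg_l (k1^2 / (2 * PI))); auto. }
      destruct (E_min g P Q Hg HP HQ Hne) as [_ H]. destruct (H Hle) as [NP [NQ Hd]].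
      split; [auto|split; [auto|]].
      destruct (polar P (ast g) NP ltac:(lra)) as [t [Ht EP]].
      exists t. split; [auto|split; [auto|]].
      rewrite (colinear P Q (ast g) (bst g) NP NQ ltac:(lra) Hd), EP.
      unfold pscale; cbn [fst snd]. f_equal; field; lra.
    + intros [HP [HQ [t [Ht [EP EQ]]]]].
      destruct (polar_pair g t Hg) as [HP0 [HQ0 [Hne0 HE0]]].
      rewrite <- EP, <- EQ in *.
      split; [auto|split; [auto|split; [auto|]]].
      intros P' Q' HP' HQ' Hne'.
      rewrite !H2_eq by auto. fold g. rewrite HE0.
      apply Rmult_le_compat_l; [lra|].
      destruct (E_min g P' Q' Hg HP' HQ' Hne') as [H _]. auto.
  - unfold ast, bst. rewrite sg1. ring.
  - unfold bst. rewrite sg1. reflexivity.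
Qed.
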